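(* Let $\widehat x=\sum_{m=0}^\infty\sum_{k=0}^{2^m-1}e_{m,k}$ and $y=\sum_{m=0}^\infty\sum_{k=0}^{2^m-1}(-1)^me_{m,k}$ (these belong to $\mathscr X$ and admit the quadratic variation $\langle\widehat x\rangle_t=t=\langle y\rangle_t$ along the dyadic partitions $\mathbb T_n=\{k2^{-n}:k=0,\dots,2^n\}$). Then for all $t\in[0,1]$, $$\lim_{n\to\infty}\langle \widehat x+y\rangle^{2n}_t=\frac43t,\qquad \lim_{n\to\infty}\langle \widehat x+y\rangle^{2n+1}_t=\frac83t,$$ and $$\lim_{n\to\infty}\langle \widehat x,y\rangle^{2n}_t=-\frac13t,\qquad \lim_{n\to\infty}\langle \widehat x,y\rangle^{2n+1}_t=\frac13t.$$ In particular, for $t>0$ the limits of $\langle\widehat x+y\rangle^n_t$ and $\langle\widehat x,y\rangle^n_t$ as $n\to\infty$ do not exist, but $\widehat x+y$ admits different continuous quadratic variations along the two refining sequences $(\mathbb T_{2n})_{n\in\mathbb N}$ and $(\mathbb T_{2n+1})_{n\in\mathbb N}$.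
   Context: The Faber--Schauder functions are $e_{0,0}(t):=(\min\{t,1-t\})^+$ and $e_{m,k}(t):=2^{-m/2}e_{0,0}(2^m t-k)$ for $t\in\mathbb R$, $m\ge1$, $k\in\mathbb Z$. $\mathscr X$ denotes the set of all functions $x\in C[0,1]$ of the form $x=\sum_{m=0}^\infty\sum_{k=0}^{2^m-1}\theta_{m,k}e_{m,k}$ (uniformly convergent series) with $\theta_{m,k}\in\{-1,+1\}$. For $s\in\mathbb T_n$, $s'$ denotes its successor in $\mathbb T_n$ ($s'=\min\{u\in\mathbb T_n:u>s\}$ if $s<1$, $s'=1$ if $s=1$). For $x,z\in C[0,1]$: $\langle x\rangle^n_t:=\sum_{s\in\mathbb T_n,\,s\le t}(x(s')-x(s))^2$ and $\langle x,z\rangle^n_t:=\sum_{s\in\mathbb T_n,\,s\le t}(x(s')-x(s))(z(s')-z(s))$. A function $x$ admits the continuous quadratic variation $\langle x\rangle$ along a refining sequence of partitions $(\mathbb S_n)$ if $\langle x\rangle_t=\lim_n\sum_{s\in\mathbb S_n,s\le t}(x(s')-x(s))^2$ exists for all $t\in[0,1]$ and is continuous in $t$. *)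

(* Defs.v *)
From Stdlib Require Import Reals Lra.
From Coquelicot Require Import Coquelicot.
Open Scope R_scope.

Definition e00 (t : R) : R := Rmax 0 (Rmin t (1 - t)).
Definition e (m k : nat) (t : R) : R :=
  / sqrt (2 ^ m) * e00 (2 ^ m * t - INR k).

Definition xhat (t : R) : R :=
  Series (fun m => sum_f_R0 (fun k => e m k t) (2 ^ m - 1)).
Definition yfun (t : R) : R :=
  Series (fun m => sum_f_R0 (fun k => (-1) ^ m * e m k t) (2 ^ m - 1)).

(* The k-th point of T_n = {k 2^-n : k = 0..2^n} and its successor s'
   (with 1' = 1). *)
Definition dpt (n k : nat) : R := INR k / 2 ^ n.
Definition dsucc (n k : nat) : R := INR (Nat.min (S k) (2 ^ n)) / 2 ^ n.

Definition qcov (n : nat) (x z : R -> R) (t : R) : R :=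
  sum_f_R0 (fun k => if Rle_dec (dpt n k) t
                     then (x (dsucc n k) - x (dpt n k)) * (z (dsucc n k) - z (dpt n k))
                     else 0) (2 ^ n).
Definition qv (n : nat) (x : R -> R) (t : R) : R := qcov n x x t.

Definition admits_cqv_along (p : nat -> nat) (x : R -> R) (A : R -> R) : Prop :=
  (forall t, 0 <= t <= 1 -> is_lim_seq (fun n => qv (p n) x t) (A t)) /\
  (forall t, 0 <= t <= 1 -> forall eps, 0 < eps -> exists delta, 0 < delta /\
     forall u, 0 <= u <= 1 -> Rabs (u - t) < delta -> Rabs (A u - A t) < eps).

(* Main.v *)
Require Import Defs.
From Stdlib Require Import Reals Lra Lia ZArith.
From Coquelicot Require Import Coquelicot.
Open Scope R_scope.

Definition pt (n l : nat) : R := INR l / 2 ^ n.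
Definition sg (n : nat) : R := / sqrt (2 ^ n).

Lemma p2pos n : 0 < 2 ^ n.
Proof. apply pow_lt; lra. Qed.

Lemma sg_pos n : 0 < sg n.
Proof. unfold sg. apply Rinv_0_lt_compat, sqrt_lt_R0, p2pos. Qed.

Lemma sg_sq n : sg n * sg n = / 2 ^ n.
Proof. unfold sg. rewrite <- Rinv_mult. rewrite sqrt_sqrt; [reflexivity|].
  left; apply p2pos. Qed.

Lemma sg_S n : sg n * sg n = 2 * (sg (S n) * sg (S n)).
Proof. rewrite !sg_sq. simpl. field. apply Rgt_not_eq, p2pos. Qed.

Lemma e00_int z : e00 (IZR z) = 0.
Proof.
  unfold e00, Rmax, Rmin.
  destruct (Z.le_gt_cases z 0) as [H|H].
  - apply IZR_le in H. destruct (Rle_dec _ _); destruct (Rle_dec _ _); lra.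
  - assert (IZR z >= 1) by (apply Rle_ge, IZR_le; lia).
    destruct (Rle_dec _ _); destruct (Rle_dec _ _); lra.
Qed.

Lemma e00_mid x y : x <= y -> ~ (x < 0 < y) -> ~ (x < 1/2 < y) -> ~ (x < 1 < y) ->
  e00 ((x + y) / 2) = (e00 x + e00 y) / 2.
Proof.
  intros Hxy H0 H1 H2. unfold e00, Rmax, Rmin.
  repeat (destruct (Rle_dec _ _)); try lra;
  destruct (Rle_lt_dec x 0); destruct (Rle_lt_dec y 0);
  destruct (Rle_lt_dec x (1/2)); destruct (Rle_lt_dec y (1/2));
  destruct (Rle_lt_dec x 1); destruct (Rle_lt_dec y 1); try lra.
Qed.

Lemma nat_between A C : ~ (INR A < INR C < INR A + 1).
Proof.
  intros [H1 H2]. apply INR_lt in H1. rewrite <- S_INR in H2. apply INR_lt in H2. lia.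
Qed.

Lemma e_zero m n l j : (n <= m)%nat -> e m j (pt n l) = 0.
Proof.
  intro H. unfold e. 
  replace (2 ^ m * pt n l - INR j) with (IZR (Z.of_nat (l * 2 ^ (m - n)) - Z.of_nat j)).
  - rewrite e00_int. ring.
  - rewrite minus_IZR, <- !INR_IZR_INZ, mult_INR, pow_INR. unfold pt.
    replace m with ((m - n) + n)%nat at 2 by lia. rewrite pow_add. simpl INR.
    replace (1+1) with 2 by lra. field. apply Rgt_not_eq, p2pos.
Qed.

Lemma e_mid m n j k : (m < n)%nat ->
  e m j (pt (S n) (2 * k + 1)) = (e m j (pt n k) + e m j (pt n (S k))) / 2.
Proof.
  intro Hmn. unfold e.
  set (Q := 2 ^ (n - m)). set (B := 2 ^ (n - m - 1)).
  assert (HQ : Q = 2 * B) by (unfold Q, B; rewrite tech_pow_Rmult; f_equal; lia).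
  assert (Hn : 2 ^ n = 2 ^ m * Q) by (unfold Q; rewrite <- pow_add; f_equal; lia).
  assert (HB : 0 < B) by apply p2pos.
  assert (Hm : 0 < 2 ^ m) by apply p2pos.
  set (x := 2 ^ m * pt n k - INR j). set (y := 2 ^ m * pt n (S k) - INR j).
  assert (Hx : x = INR k / Q - INR j) by (unfold x, pt; rewrite Hn; field; lra).
  assert (Hy : y = (INR k + 1) / Q - INR j) by (unfold y, pt; rewrite S_INR, Hn; field; lra).
  assert (Hmid : 2 ^ m * pt (S n) (2 * k + 1) - INR j = (x + y) / 2).
  { rewrite Hx, Hy. unfold pt. rewrite plus_INR, mult_INR. simpl pow. rewrite Hn.
    simpl INR. field. lra. }
  assert (G : forall a : nat, INR k / Q - INR j < INR a / 2 ->
           INR a / 2 < (INR k+1)/Q - INR j -> False).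
    { intros a H1 H2.
      apply (nat_between k (j * 2^(n-m) + a * 2^(n-m-1))).
      rewrite plus_INR, !mult_INR, !pow_INR. replace (INR 2) with 2 by (simpl; lra).
      change (2^(n-m)) with Q. change (2 ^ (n - m - 1)) with B.
      assert (H3 : INR k / Q < INR j + INR a / 2) by lra.
      assert (H4 : INR j + INR a / 2 < (INR k + 1) / Q) by lra.
      apply Rlt_div_l in H3; [|lra]. apply Rlt_div_r in H4; [|lra].
      rewrite HQ in H3, H4. split; nra. }
  rewrite Hmid, e00_mid.
  - field. apply Rgt_not_eq, sqrt_lt_R0; lra.
  - rewrite Hx, Hy. unfold Rdiv. assert (0 < / Q) by (apply Rinv_0_lt_compat; lra). nra.
  - intros [H1 H2]; rewrite Hx in H1; rewrite Hy in H2. apply (G 0%nat); simpl INR; lra.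
  - intros [H1 H2]; rewrite Hx in H1; rewrite Hy in H2. apply (G 1%nat); simpl INR; lra.
  - intros [H1 H2]; rewrite Hx in H1; rewrite Hy in H2. apply (G 2%nat); simpl INR; lra.
Qed.

Lemma e_top n j k : e n j (pt (S n) (2 * k + 1)) = if Nat.eq_dec j k then sg n / 2 else 0.
Proof.
  unfold e. fold (sg n).
  assert (Hm : 0 < 2 ^ n) by apply p2pos.
  replace (2 ^ n * pt (S n) (2 * k + 1) - INR j) with (INR k - INR j + /2).
  2:{ unfold pt. rewrite plus_INR, mult_INR. simpl. field. lra. }
  destruct (Nat.eq_dec j k) as [->|Hne].
  - unfold e00, Rmax, Rmin. repeat destruct (Rle_dec _ _); lra.
  - destruct (Nat.lt_gt_cases j k) as [[Hl|Hl] _]; [exact Hne|..].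
    + apply le_INR in Hl. rewrite S_INR in Hl.
      unfold e00, Rmax, Rmin. repeat destruct (Rle_dec _ _); nra.
    + apply le_INR in Hl. rewrite S_INR in Hl.
      unfold e00, Rmax, Rmin. repeat destruct (Rle_dec _ _); nra.
Qed.

Fixpoint fs (a : nat -> R) (N : nat) : R :=
  match N with O => 0 | S N => fs a N + a N end.

Lemma fs_S a N : fs a (S N) = fs a N + a N.
Proof. reflexivity. Qed.

Lemma sum_fs a N : sum_f_R0 a N = fs a (S N).
Proof. induction N; simpl in *; [ring|]. rewrite IHN. reflexivity. Qed.

Lemma fs_ext a b N : (forall m, (m < N)%nat -> a m = b m) -> fs a N = fs b N.
Proof. induction N; intro H; simpl; [reflexivity|]. rewrite IHN by (intros; apply H; lia).
  rewrite H by lia. reflexivity. Qed.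

Lemma sum_single (c : R) k N : (k <= N)%nat ->
  sum_f_R0 (fun j => if Nat.eq_dec j k then c else 0) N = c.
Proof.
  induction N; intro H.
  - assert (k = 0%nat) by lia. subst. reflexivity.
  - rewrite tech5. destruct (Nat.eq_dec (S N) k) as [E|E].
    + subst. replace (sum_f_R0 _ N) with 0; [ring|].
      clear. assert (forall M, (M < S N)%nat -> sum_f_R0 (fun j => if Nat.eq_dec j (S N) then c else 0) M = 0).
      { induction M; intro. - reflexivity.
        - rewrite tech5. destruct (Nat.eq_dec _ _); try lia. rewrite IHM by lia. ring. }
      symmetry; apply H; lia.
    + rewrite IHN by lia. ring.
Qed.

Lemma sum_avg u a b N : (forall j, u j = (a j + b j) / 2) ->
  sum_f_R0 u N = (sum_f_R0 a N + sum_f_R0 b N) / 2.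
Proof. intro H. induction N; simpl; rewrite ?IHN, !H; field. Qed.

Lemma sum_zero u N : (forall j, u j = 0) -> sum_f_R0 u N = 0.
Proof. intro H. induction N; simpl; rewrite ?IHN, !H; ring. Qed.

Definition G (c : nat -> R) (m : nat) (t : R) : R :=
  sum_f_R0 (fun j => c m * e m j t) (2 ^ m - 1).
Definition Fc (c : nat -> R) (t : R) : R := Series (fun m => G c m t).

Lemma G_zero c m n l : (n <= m)%nat -> G c m (pt n l) = 0.
Proof. intro H. unfold G. apply sum_zero. intro j. rewrite e_zero by exact H. ring. Qed.

Lemma G_mid c m n k : (m < n)%nat ->
  G c m (pt (S n) (2 * k + 1)) = (G c m (pt n k) + G c m (pt n (S k))) / 2.
Proof. intro H. unfold G. apply sum_avg. intro j. rewrite e_mid by exact H. field. Qed.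

Lemma G_top c n k : (k < 2 ^ n)%nat -> G c n (pt (S n) (2 * k + 1)) = c n * sg n / 2.
Proof.
  intro H. unfold G.
  rewrite (sum_eq _ (fun j => if Nat.eq_dec j k then c n * sg n / 2 else 0)).
  - apply sum_single. lia.
  - intros j _. rewrite e_top. destruct (Nat.eq_dec j k); field.
Qed.

Lemma Series_fin a N : (forall m, (N <= m)%nat -> a m = 0) -> Series a = fs a N.
Proof.
  intro H. apply is_series_unique. unfold is_series.
  change (is_lim_seq (sum_n a) (fs a N)).
  assert (E : forall M, sum_n a M = fs a (S M)).
  { induction M. - rewrite sum_O. simpl. ring.
    - rewrite sum_Sn, IHM. reflexivity. }
  apply is_lim_seq_ext_loc with (fun _ => fs a N); [|apply is_lim_seq_const].
  exists N. intros M HM. rewrite E. clear E.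
  induction HM. - simpl. rewrite H by lia. ring.
  - simpl. simpl in IHHM. rewrite <- IHHM. rewrite (H (S m)) by lia. ring.
Qed.

Lemma Fc_pt c n l : Fc c (pt n l) = fs (fun m => G c m (pt n l)) n.
Proof. apply Series_fin. intros m H. apply G_zero, H. Qed.

Lemma Fc_mid c n k : (k < 2 ^ n)%nat ->
  Fc c (pt (S n) (2 * k + 1)) = (Fc c (pt n k) + Fc c (pt n (S k))) / 2 + c n * sg n / 2.
Proof.
  intro H. rewrite !Fc_pt. change (fs ?a (S n)) with (fs a n + a n). cbv beta. rewrite G_top by exact H.
  f_equal.
  assert (forall N, (N <= n)%nat -> fs (fun m => G c m (pt (S n) (2 * k + 1))) N =
    (fs (fun m => G c m (pt n k)) N + fs (fun m => G c m (pt n (S k))) N) / 2).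
  { induction N; intro HN; [simpl; field|]. rewrite !fs_S, IHN by lia. rewrite G_mid by lia. field. }
  apply H0. lia.
Qed.

Definition D (f : R -> R) n k := f (pt n (S k)) - f (pt n k).
Definition Mid (f : R -> R) (h : nat -> R) :=
  (forall n k, (k < 2 ^ n)%nat ->
     f (pt (S n) (2 * k + 1)) = (f (pt n k) + f (pt n (S k))) / 2 + h n) /\
  f (pt 0 1) - f (pt 0 0) = 0.

Lemma pt_even n k : pt (S n) (2 * k) = pt n k.
Proof. unfold pt. rewrite mult_INR. simpl. field. apply Rgt_not_eq, p2pos. Qed.

Lemma pt_odd n k : pt (S n) (S (2 * k + 1)) = pt n (S k).
Proof. replace (S (2 * k + 1)) with (2 * S k)%nat by lia. apply pt_even. Qed.

Lemma D_even f h n k : Mid f h -> (k < 2 ^ n)%nat -> D f (S n) (2 * k) = D f n k / 2 + h n.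
Proof. intros [M _] H. unfold D. replace (S (2 * k)) with (2 * k + 1)%nat by lia.
  rewrite M by exact H. rewrite pt_even. field. Qed.

Lemma D_odd f h n k : Mid f h -> (k < 2 ^ n)%nat -> D f (S n) (2 * k + 1) = D f n k / 2 - h n.
Proof. intros [M _] H. unfold D. rewrite pt_odd, M by exact H. field. Qed.

Lemma split_lt n k : (k < 2 ^ S n)%nat -> exists j, (j < 2 ^ n)%nat /\ (k = 2 * j \/ k = 2 * j + 1)%nat.
Proof. change (2 ^ S n)%nat with (2 * 2 ^ n)%nat. intro H.
  destruct (Nat.Even_or_Odd k) as [[j Hj]|[j Hj]]; exists j; lia. Qed.

Lemma split_le n K : (K <= 2 ^ S n)%nat -> exists J,
  ((K = 2 * J)%nat /\ (J <= 2 ^ n)%nat) \/ ((K = 2 * J + 1)%nat /\ (J < 2 ^ n)%nat).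
Proof. change (2 ^ S n)%nat with (2 * 2 ^ n)%nat. intro H.
  destruct (Nat.Even_or_Odd K) as [[j Hj]|[j Hj]]; exists j; lia. Qed.

Lemma D_bound f h : Mid f h -> (forall n, Rabs (h n) <= sg n) ->
  forall n k, (k < 2 ^ n)%nat -> Rabs (D f n k) <= 6 * sg n.
Proof.
  intros HM Hh. induction n; intros k Hk.
  - assert (k = 0%nat) by (simpl in Hk; lia). subst. destruct HM as [_ H0].
    unfold D. rewrite H0, Rabs_R0. pose proof (sg_pos 0). lra.
  - destruct (split_lt n k Hk) as [j [Hj [->| ->]]].
    + rewrite (D_even f h) by assumption. pose proof (IHn j Hj). pose proof (Hh n).
      pose proof (sg_S n). pose proof (sg_pos n). pose proof (sg_pos (S n)).
      assert (4 * sg n <= 6 * sg (S n)) by nra.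
      revert H H0. unfold Rabs. repeat destruct (Rcase_abs _); lra.
    + rewrite (D_odd f h) by assumption. pose proof (IHn j Hj). pose proof (Hh n).
      pose proof (sg_S n). pose proof (sg_pos n). pose proof (sg_pos (S n)).
      assert (4 * sg n <= 6 * sg (S n)) by nra.
      revert H H0. unfold Rabs. repeat destruct (Rcase_abs _); lra.
Qed.

Definition P f g n K := fs (fun k => D f n k * D g n k) K.

Lemma P_even f g h h' n J : Mid f h -> Mid g h' -> (J <= 2 ^ n)%nat ->
  P f g (S n) (2 * J) = P f g n J / 2 + 2 * INR J * h n * h' n.
Proof.
  intros Hf Hg. induction J; intro HJ.
  - change (2*0)%nat with 0%nat. unfold P. simpl fs. simpl INR. field.
  - replace (2 * S J)%nat with (S (S (2 * J))) by lia. unfold P in *. rewrite !fs_S.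
    rewrite IHJ by lia. replace (S (2 * J)) with (2 * J + 1)%nat by lia.
    rewrite (D_even f h), (D_even g h'), (D_odd f h), (D_odd g h') by (auto; lia).
    rewrite S_INR. field.
Qed.

Fixpoint vseq (a : nat -> R) (n : nat) : R :=
  match n with O => 0 | S n => vseq a n / 2 + a n end.

Lemma v_bound a : (forall n, Rabs (a n) <= 2) -> forall n, Rabs (vseq a n) <= 4.
Proof. intros H n. induction n; simpl. - rewrite Rabs_R0; lra.
  - pose proof (H n). revert IHn H0. unfold Rabs. repeat destruct (Rcase_abs _); lra. Qed.

Lemma a_bound h h' : (forall n, Rabs (h n) <= sg n) -> (forall n, Rabs (h' n) <= sg n) ->
  forall n, Rabs (2 ^ S n * h n * h' n) <= 2.
Proof.
  intros H1 H2 n. rewrite !Rabs_mult. rewrite (Rabs_pos_eq (2 ^ S n)) by (left; apply p2pos).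
  pose proof (sg_sq n). pose proof (p2pos n). pose proof (H1 n). pose proof (H2 n).
  pose proof (Rabs_pos (h n)). pose proof (Rabs_pos (h' n)).
  assert (Rabs (h n) * Rabs (h' n) <= / 2 ^ n) by nra.
  simpl pow. replace 2 with (2 * 2 ^ n * / 2 ^ n) at 3 by (field; lra).
  assert (0 < 2 * 2 ^ n) by lra. nra.
Qed.

Lemma inv2n_le n : / 2 ^ n <= (3/4) ^ n.
Proof. rewrite <- pow_inv. apply pow_incr. lra. Qed.

Lemma r_bound f g h h' : Mid f h -> Mid g h' ->
  (forall n, Rabs (h n) <= sg n) -> (forall n, Rabs (h' n) <= sg n) ->
  forall n K, (K <= 2 ^ n)%nat ->
  Rabs (P f g n K - INR K * vseq (fun m => 2 ^ S m * h m * h' m) n / 2 ^ n) <= 80 * (3/4) ^ n.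
Proof.
  intros Hf Hg Hh Hh'. set (a := fun m => 2 ^ S m * h m * h' m).
  induction n; intros K HK.
  - simpl in HK. assert (K = 0 \/ K = 1)%nat as [->| ->] by lia.
    + unfold P. simpl. replace (0 - 0 * 0 / 1) with 0 by field. rewrite Rabs_R0. lra.
    + unfold P. simpl fs. unfold D at 1. rewrite (proj2 Hf). simpl vseq.
      replace (0 + 0 * D g 0 0 - INR 1 * 0 / 2 ^ 0) with 0 by (simpl; field).
      rewrite Rabs_R0. simpl; lra.
  - pose proof (p2pos n) as Hp.
    assert (Hvn := v_bound a (a_bound h h' Hh Hh') (S n)).
    pose proof (inv2n_le n) as Hi.
    assert (Hpw : 0 < (3/4)^n) by (apply pow_lt; lra).
    destruct (split_le n K HK) as [J [[-> HJ]|[-> HJ]]].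
    + assert (E : P f g (S n) (2 * J) - INR (2 * J) * vseq a (S n) / 2 ^ S n =
        (P f g n J - INR J * vseq a n / 2 ^ n) / 2).
      { rewrite (P_even f g h h') by assumption. simpl vseq. unfold a. rewrite mult_INR.
        simpl pow. simpl INR. field. lra. }
      rewrite E. specialize (IHn J HJ). simpl pow.
      revert IHn. unfold Rabs. repeat destruct (Rcase_abs _); lra.
    + assert (E : P f g (S n) (2 * J + 1) - INR (2 * J + 1) * vseq a (S n) / 2 ^ S n =
        (P f g n J - INR J * vseq a n / 2 ^ n) / 2 + D f (S n) (2 * J) * D g (S n) (2 * J)
        - vseq a (S n) / 2 ^ S n).
      { replace (2 * J + 1)%nat with (S (2 * J)) by lia. unfold P at 1. rewrite fs_S.
        fold (P f g (S n) (2 * J)).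
        rewrite (P_even f g h h') by (auto; lia). simpl vseq. unfold a. rewrite S_INR, mult_INR.
        simpl pow. simpl INR. field. lra. }
      rewrite E. specialize (IHn J ltac:(lia)).
      assert (HD1 : Rabs (D f (S n) (2 * J)) <= 6 * sg (S n))
        by (apply (D_bound f h); auto; simpl; lia).
      assert (HD2 : Rabs (D g (S n) (2 * J)) <= 6 * sg (S n))
        by (apply (D_bound g h'); auto; simpl; lia).
      assert (HDD : Rabs (D f (S n) (2 * J) * D g (S n) (2 * J)) <= 36 * / 2 ^ S n).
      { rewrite Rabs_mult, <- sg_sq. pose proof (Rabs_pos (D f (S n) (2 * J))).
        pose proof (Rabs_pos (D g (S n) (2 * J))). pose proof (sg_pos (S n)). nra. }
      assert (Hv2 : Rabs (vseq a (S n) / 2 ^ S n) <= 4 * / 2 ^ S n).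
      { unfold Rdiv. rewrite Rabs_mult, (Rabs_pos_eq (/ _)).
        - apply Rmult_le_compat_r; [left; apply Rinv_0_lt_compat, p2pos| exact Hvn].
        - left; apply Rinv_0_lt_compat, p2pos. }
      assert (Hs : 2 * / 2 ^ S n = / 2 ^ n) by (simpl; field; lra).
      change ((3/4)^(S n)) with (3/4 * (3/4)^n).
      revert IHn HDD Hv2. unfold Rabs. repeat destruct (Rcase_abs _); lra.
Qed.

Lemma downsum (Pr : nat -> Prop) (dec : forall k, {Pr k} + {~ Pr k}) (a : nat -> R) N :
  (forall i j, (i <= j)%nat -> Pr j -> Pr i) ->
  exists K, (K <= S N)%nat /\ fs (fun k => if dec k then a k else 0) (S N) = fs a K /\
    (forall k, (k < K)%nat -> Pr k) /\ (forall k, (K <= k <= N)%nat -> ~ Pr k).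
Proof.
  intro Hd. induction N.
  - rewrite fs_S. destruct (dec 0%nat) as [p|p].
    + exists 1%nat. refine (conj _ (conj _ (conj _ _))); [lia|reflexivity| |lia].
      intros k Hk. replace k with 0%nat by lia. exact p.
    + exists 0%nat. refine (conj _ (conj _ (conj _ _))); [lia|simpl; ring|lia|].
      intros k Hk. replace k with 0%nat by lia. exact p.
  - destruct IHN as [K [HK [Hs [H1 H2]]]].
    rewrite fs_S, Hs. destruct (dec (S N)) as [p|p].
    + assert (K = S N). { destruct (Nat.eq_dec K (S N)); [assumption|].
        exfalso. apply (H2 N); [lia|]. apply (Hd N (S N)); [lia|exact p]. }
      subst K. exists (S (S N)). refine (conj _ (conj _ (conj _ _))); [lia|reflexivity| |lia].
      intros k Hk. destruct (Nat.eq_dec k (S N)) as [->|]; [exact p|]. apply H1; lia.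
    + exists K. refine (conj _ (conj _ (conj _ _))); [lia|ring|exact H1|].
      intros k Hk. destruct (Nat.eq_dec k (S N)) as [->|]; [exact p|]. apply H2; lia.
Qed.

Lemma qcov_P f g n t : 0 <= t <= 1 ->
  exists K, (K <= 2 ^ n)%nat /\ qcov n f g t = P f g n K /\ Rabs (INR K / 2 ^ n - t) <= / 2 ^ n.
Proof.
  intro Ht. unfold qcov. rewrite sum_fs.
  set (T := fun k => (f (dsucc n k) - f (dpt n k)) * (g (dsucc n k) - g (dpt n k))).
  destruct (downsum (fun k => dpt n k <= t) (fun k => Rle_dec (dpt n k) t) T (2 ^ n))
    as [K [HK [Hs [H1 H2]]]].
  { intros i j Hij Hj. unfold dpt in *. apply le_INR in Hij.
    pose proof (p2pos n). apply Rle_trans with (INR j / 2 ^ n); [|exact Hj].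
    unfold Rdiv. apply Rmult_le_compat_r; [left; apply Rinv_0_lt_compat; lra|exact Hij]. }
  unfold T in Hs; cbv beta in Hs. rewrite Hs. fold T.
  pose proof (p2pos n) as Hp.
  assert (HT : forall k, (k < 2 ^ n)%nat -> T k = D f n k * D g n k).
  { intros k Hk. unfold T, D, dsucc, dpt. rewrite Nat.min_l by lia. reflexivity. }
  assert (H2n : INR (2 ^ n) / 2 ^ n = 1).
  { rewrite pow_INR. simpl INR. replace (1+1) with 2 by ring. field. lra. }
  destruct (Nat.eq_dec K (S (2 ^ n))) as [->|HK'].
  - exists (2 ^ n)%nat. split; [lia|]. split.
    + rewrite fs_S. replace (T (2 ^ n)%nat) with 0.
      * rewrite Rplus_0_r. apply fs_ext. intros; apply HT; assumption.
      * unfold T, dsucc, dpt. rewrite Nat.min_r by lia. ring.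
    + assert (Hd := H1 (2 ^ n)%nat ltac:(lia)). simpl in Hd. unfold dpt in Hd.
      rewrite H2n in *. replace (1 - t) with 0 by lra. rewrite Rabs_R0.
      left; apply Rinv_0_lt_compat; lra.
  - exists K. split; [lia|]. split.
    + apply fs_ext. intros k Hk. apply HT. lia.
    + assert (K0 : K <> 0%nat).
      { intro E. subst K. apply (H2 0%nat); [lia|]. simpl. unfold dpt. simpl. lra. }
      assert (Ha := H1 (K - 1)%nat ltac:(lia)). simpl in Ha. unfold dpt in Ha.
      assert (Hb := H2 K ltac:(lia)). simpl in Hb. unfold dpt in Hb.
      rewrite minus_INR in Ha by lia. simpl INR in Ha.
      assert (E : (INR K - 1) / 2 ^ n = INR K / 2 ^ n - / 2 ^ n) by (field; lra).
      rewrite E in Ha. unfold Rabs. destruct (Rcase_abs _); lra.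
Qed.

Lemma main_est f g h h' : Mid f h -> Mid g h' ->
  (forall n, Rabs (h n) <= sg n) -> (forall n, Rabs (h' n) <= sg n) ->
  forall n t, 0 <= t <= 1 ->
  Rabs (qcov n f g t - t * vseq (fun m => 2 ^ S m * h m * h' m) n) <= 84 * (3/4) ^ n.
Proof.
  intros Hf Hg Hh Hh' n t Ht.
  destruct (qcov_P f g n t Ht) as [K [HK [-> Hd]]].
  pose proof (r_bound f g h h' Hf Hg Hh Hh' n K HK) as Hr.
  set (v := vseq (fun m => 2 ^ S m * h m * h' m) n) in *.
  assert (Hv : Rabs v <= 4) by (apply v_bound, a_bound; assumption).
  pose proof (p2pos n). pose proof (inv2n_le n).
  replace (P f g n K - t * v) with ((P f g n K - INR K * v / 2 ^ n) + (INR K / 2 ^ n - t) * v)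
    by (field; lra).
  eapply Rle_trans; [apply Rabs_triang|]. rewrite Rabs_mult.
  assert (Rabs (INR K / 2 ^ n - t) * Rabs v <= / 2 ^ n * 4).
  { apply Rmult_le_compat; auto using Rabs_pos. }
  lra.
Qed.

Lemma pow34_mono m n : (n <= m)%nat -> (3/4) ^ m <= (3/4) ^ n.
Proof.
  intro H. replace m with ((m - n) + n)%nat by lia. rewrite pow_add.
  assert (0 <= (3/4)^n) by (apply pow_le; lra).
  assert ((3/4)^(m-n) <= 1) by (rewrite <- (pow1 (m-n)); apply pow_incr; lra).
  assert (0 <= (3/4)^(m-n)) by (apply pow_le; lra). nra.
Qed.

Lemma lim_scal (u : nat -> R) (a l : R) : is_lim_seq u l -> is_lim_seq (fun n => a * u n) (a * l).
Proof. intro H. apply (is_lim_seq_scal_l u a (Finite l)) in H. exact H. Qed.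

Lemma lim_geom84 (c : R) : is_lim_seq (fun n => c * (3/4) ^ n) 0.
Proof. replace 0 with (c * 0) by ring. apply lim_scal. apply is_lim_seq_geom.
  rewrite Rabs_pos_eq; lra. Qed.

Lemma lim_sub (p : nat -> nat) (x w : nat -> R) (L : R) t M :
  (forall n, (n <= p n)%nat) ->
  (forall n, Rabs (x n - t * w n) <= 84 * (3/4) ^ (p n)) ->
  is_lim_seq w L -> M = t * L -> is_lim_seq x M.
Proof.
  intros Hp Hx Hw ->.
  assert (He : is_lim_seq (fun n => x n - t * w n) 0).
  { apply is_lim_seq_le_le with (fun n => -84 * (3/4)^n) (fun n => 84 * (3/4)^n).
    - intro n. pose proof (Hx n). pose proof (pow34_mono (p n) n (Hp n)).
      revert H. unfold Rabs. destruct (Rcase_abs _); lra.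
    - apply lim_geom84.
    - apply lim_geom84. }
  apply is_lim_seq_ext with (fun n => t * w n + (x n - t * w n)); [intro; ring|].
  replace (t * L) with (t * L + 0) by ring.
  apply is_lim_seq_plus'; [|exact He].
  apply lim_scal. exact Hw.
Qed.

Lemma vseq_S a n : vseq a (S n) = vseq a n / 2 + a n.
Proof. reflexivity. Qed.

Lemma v_per a al be : (forall j, a (2 * j)%nat = al) -> (forall j, a (2 * j + 1)%nat = be) ->
  forall N, vseq a (2 * N) = (2 * al + 4 * be) / 3 * (1 - (1/4) ^ N) /\
            vseq a (2 * N + 1) = vseq a (2 * N) / 2 + al.
Proof.
  intros Ha Hb. induction N.
  - simpl. rewrite <- (Ha 0%nat). simpl. split; field.
  - destruct IHN as [IH1 IH2].
    assert (E1 : vseq a (2 * S N) = vseq a (2 * N + 1) / 2 + be).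
    { replace (2 * S N)%nat with (S (2 * N + 1)) by lia. rewrite vseq_S, Hb. reflexivity. }
    assert (E2 : vseq a (2 * S N + 1) = vseq a (2 * S N) / 2 + al).
    { replace (2 * S N + 1)%nat with (S (2 * S N)) by lia. rewrite vseq_S, Ha. reflexivity. }
    split; [|exact E2]. rewrite E1, IH2, IH1. simpl pow. field.
Qed.

Lemma v_lims a al be : (forall j, a (2 * j)%nat = al) -> (forall j, a (2 * j + 1)%nat = be) ->
  is_lim_seq (fun N => vseq a (2 * N)) ((2 * al + 4 * be) / 3) /\
  is_lim_seq (fun N => vseq a (2 * N + 1)) ((2 * al + 4 * be) / 3 / 2 + al).
Proof.
  intros Ha Hb. pose proof (v_per a al be Ha Hb) as Hv.
  assert (L1 : is_lim_seq (fun N => vseq a (2 * N)) ((2 * al + 4 * be) / 3)).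
  { apply is_lim_seq_ext with (fun N => (2 * al + 4 * be) / 3 * (1 - (1/4) ^ N)).
    - intro N. symmetry. apply Hv.
    - set (Le := (2 * al + 4 * be) / 3).
      assert (H : is_lim_seq (fun N => Le * (1 - (1/4)^N)) (Le * (1 - 0))).
      { apply lim_scal. apply is_lim_seq_minus'.
        + apply is_lim_seq_const.
        + apply is_lim_seq_geom. rewrite Rabs_pos_eq; lra. }
      rewrite Rminus_0_r, Rmult_1_r in H. exact H. }
  split; [exact L1|].
  apply is_lim_seq_ext with (fun N => vseq a (2 * N) / 2 + al).
  - intro N. symmetry. apply Hv.
  - apply is_lim_seq_plus'; [|apply is_lim_seq_const].
    apply is_lim_seq_ext with (fun N => /2 * vseq a (2 * N)); [intro; unfold Rdiv; ring|].
    replace ((2 * al + 4 * be) / 3 / 2) with (/2 * ((2 * al + 4 * be) / 3)) by field.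
    apply lim_scal. exact L1.
Qed.

Lemma xhat_eq t : xhat t = Fc (fun _ => 1) t.
Proof. unfold xhat, Fc, G. apply Series_ext; intro m; apply sum_eq; intros; ring. Qed.

Lemma yfun_eq t : yfun t = Fc (fun m => (-1) ^ m) t.
Proof. unfold yfun, Fc, G. apply Series_ext; intro m; apply sum_eq; intros; ring. Qed.

Lemma Mid_Fc c : Mid (Fc c) (fun n => c n * sg n / 2).
Proof. split. - intros n k H. apply Fc_mid, H. - rewrite !Fc_pt. simpl. ring. Qed.

Lemma Mid_ext f f' h : (forall t, f t = f' t) -> Mid f h -> Mid f' h.
Proof. intros E [H1 H2]. split. - intros n k Hk. rewrite <- !E. apply H1, Hk.
  - rewrite <- !E. exact H2. Qed.

Lemma Mid_add f g h h' : Mid f h -> Mid g h' -> Mid (fun t => f t + g t) (fun n => h n + h' n).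
Proof. intros [H1 H2] [H3 H4]. split. - intros n k Hk. rewrite H1, H3 by exact Hk. field.
  - lra. Qed.

Definition hx n := 1 * sg n / 2.
Definition hy n := (-1) ^ n * sg n / 2.

Lemma Mid_x : Mid xhat hx.
Proof. apply Mid_ext with (Fc (fun _ => 1)); [intro; symmetry; apply xhat_eq|apply Mid_Fc]. Qed.
Lemma Mid_y : Mid yfun hy.
Proof. apply Mid_ext with (Fc (fun m => (-1) ^ m)); [intro; symmetry; apply yfun_eq|apply Mid_Fc]. Qed.

Lemma hx_b n : Rabs (hx n) <= sg n / 2.
Proof. unfold hx. pose proof (sg_pos n). rewrite Rabs_pos_eq; lra. Qed.
Lemma hy_b n : Rabs (hy n) <= sg n / 2.
Proof. unfold hy. pose proof (sg_pos n). unfold Rdiv. rewrite !Rabs_mult, pow_1_abs.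
  rewrite (Rabs_pos_eq (sg n)), (Rabs_pos_eq (/2)); lra. Qed.

Lemma hx_b' n : Rabs (hx n) <= sg n.
Proof. pose proof (hx_b n). pose proof (sg_pos n). lra. Qed.
Lemma hy_b' n : Rabs (hy n) <= sg n.
Proof. pose proof (hy_b n). pose proof (sg_pos n). lra. Qed.
Lemma hs_b n : Rabs (hx n + hy n) <= sg n.
Proof. eapply Rle_trans; [apply Rabs_triang|]. pose proof (hx_b n). pose proof (hy_b n). lra. Qed.

Lemma m1_even j : (-1) ^ (2 * j) = 1.
Proof. rewrite pow_mult. replace ((-1)^2) with 1 by (simpl; ring). apply pow1. Qed.
Lemma m1_odd j : (-1) ^ (2 * j + 1) = -1.
Proof. rewrite pow_add, m1_even. simpl. ring. Qed.

Lemma two_sg n : 2 ^ S n * (sg n * sg n) = 2.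
Proof. rewrite sg_sq. pose proof (p2pos n). simpl. field. lra. Qed.

Lemma no_lim (u : nat -> R) (l1 l2 : R) :
  is_lim_seq (fun n => u (2 * n)%nat) l1 -> is_lim_seq (fun n => u (2 * n + 1)%nat) l2 ->
  l1 <> l2 -> ~ ex_lim_seq u.
Proof.
  intros H1 H2 Hne [l Hl].
  assert (S1 : is_lim_seq (fun n => u (2 * n)%nat) l).
  { apply (is_lim_seq_subseq u l (fun n => 2 * n)%nat); [apply eventually_subseq; intro; lia|exact Hl]. }
  assert (S2 : is_lim_seq (fun n => u (2 * n + 1)%nat) l).
  { apply (is_lim_seq_subseq u l (fun n => 2 * n + 1)%nat); [apply eventually_subseq; intro; lia|exact Hl]. }
  apply is_lim_seq_unique in H1, H2, S1, S2. rewrite S1 in H1. rewrite S2 in H2.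
  rewrite H1 in H2. injection H2. exact Hne.
Qed.

Lemma cont_lin (c : R) : 0 < c -> forall t, 0 <= t <= 1 -> forall eps, 0 < eps -> exists delta, 0 < delta /\
     forall u, 0 <= u <= 1 -> Rabs (u - t) < delta -> Rabs (c * u - c * t) < eps.
Proof.
  intros Hc t _ eps He. exists (eps / c). split; [apply Rdiv_lt_0_compat; lra|].
  intros u _ Hu. replace (c * u - c * t) with (c * (u - t)) by ring.
  rewrite Rabs_mult, (Rabs_pos_eq c) by lra.
  apply Rlt_div_r in Hu; [|lra]. lra.
Qed.

Definition hs n := hx n + hy n.
Lemma Mid_s : Mid (fun t => xhat t + yfun t) hs.
Proof. apply (Mid_add xhat yfun hx hy Mid_x Mid_y). Qed.

Lemma lims_ss t : 0 <= t <= 1 ->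
  is_lim_seq (fun n => qv (2 * n) (fun t => xhat t + yfun t) t) (4 / 3 * t) /\
  is_lim_seq (fun n => qv (2 * n + 1) (fun t => xhat t + yfun t) t) (8 / 3 * t).
Proof.
  intro Ht. set (a := fun m => 2 ^ S m * hs m * hs m).
  assert (Ha : forall j, a (2 * j)%nat = 2).
  { intro j. unfold a, hs, hx, hy. rewrite m1_even. transitivity (2 ^ S (2 * j) * (sg (2 * j) * sg (2 * j))); [field|apply two_sg]. }
  assert (Hb : forall j, a (2 * j + 1)%nat = 0).
  { intro j. unfold a, hs, hx, hy. rewrite m1_odd. field. }
  destruct (v_lims a 2 0 Ha Hb) as [L1 L2].
  pose proof (main_est _ _ hs hs Mid_s Mid_s hs_b hs_b) as ME.
  split.
  - eapply (lim_sub (fun n => 2 * n)%nat _ (fun N => vseq a (2 * N)) _ t);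
      [intro; lia| intro n; apply (ME (2 * n)%nat t Ht)| exact L1| field].
  - eapply (lim_sub (fun n => 2 * n + 1)%nat _ (fun N => vseq a (2 * N + 1)) _ t);
      [intro; lia| intro n; apply (ME (2 * n + 1)%nat t Ht)| exact L2| field].
Qed.

Lemma lims_xy t : 0 <= t <= 1 ->
  is_lim_seq (fun n => qcov (2 * n) xhat yfun t) (- (1 / 3) * t) /\
  is_lim_seq (fun n => qcov (2 * n + 1) xhat yfun t) (1 / 3 * t).
Proof.
  intro Ht. set (a := fun m => 2 ^ S m * hx m * hy m).
  assert (Ha : forall j, a (2 * j)%nat = 1/2).
  { intro j. unfold a, hx, hy. rewrite m1_even.
    transitivity (/4 * (2 ^ S (2 * j) * (sg (2 * j) * sg (2 * j)))); [field|rewrite two_sg; field]. }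
  assert (Hb : forall j, a (2 * j + 1)%nat = -1/2).
  { intro j. unfold a, hx, hy. rewrite m1_odd.
    transitivity (-/4 * (2 ^ S (2 * j + 1) * (sg (2 * j + 1) * sg (2 * j + 1)))); [field|rewrite two_sg; field]. }
  destruct (v_lims a (1/2) (-1/2) Ha Hb) as [L1 L2].
  pose proof (main_est _ _ hx hy Mid_x Mid_y hx_b' hy_b') as ME.
  split.
  - eapply (lim_sub (fun n => 2 * n)%nat _ (fun N => vseq a (2 * N)) _ t);
      [intro; lia| intro n; apply (ME (2 * n)%nat t Ht)| exact L1| field].
  - eapply (lim_sub (fun n => 2 * n + 1)%nat _ (fun N => vseq a (2 * N + 1)) _ t);
      [intro; lia| intro n; apply (ME (2 * n + 1)%nat t Ht)| exact L2| field].
Qed.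

Theorem proposition2p7 :
  let s := fun t => xhat t + yfun t in
  (forall t, 0 <= t <= 1 ->
     is_lim_seq (fun n => qv (2 * n) s t) (4 / 3 * t) /\
     is_lim_seq (fun n => qv (2 * n + 1) s t) (8 / 3 * t) /\
     is_lim_seq (fun n => qcov (2 * n) xhat yfun t) (- (1 / 3) * t) /\
     is_lim_seq (fun n => qcov (2 * n + 1) xhat yfun t) (1 / 3 * t)) /\
  (forall t, 0 < t <= 1 ->
     ~ ex_lim_seq (fun n => qv n s t) /\
     ~ ex_lim_seq (fun n => qcov n xhat yfun t)) /\
  (exists A1 A2 : R -> R,
     admits_cqv_along (fun n => 2 * n)%nat s A1 /\
     admits_cqv_along (fun n => 2 * n + 1)%nat s A2 /\
     (forall t, 0 < t <= 1 -> A1 t <> A2 t)).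
Proof.
  intro s. split; [|split].
  - intros t Ht. destruct (lims_ss t Ht). destruct (lims_xy t Ht). tauto.
  - intros t Ht. assert (Ht' : 0 <= t <= 1) by lra.
    destruct (lims_ss t Ht'). destruct (lims_xy t Ht'). split.
    + apply (no_lim (fun n => qv n s t) (4/3*t) (8/3*t)); auto. lra.
    + apply (no_lim (fun n => qcov n xhat yfun t) (-(1/3)*t) (1/3*t)); auto. lra.
  - exists (fun t => 4/3 * t), (fun t => 8/3 * t). split; [|split].
    + split. * intros t Ht. apply (lims_ss t Ht). * apply cont_lin; lra.
    + split. * intros t Ht. apply (lims_ss t Ht). * apply cont_lin; lra.
    + intros t Ht. lra.
Qed.
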